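(* Fix a binary subcarrier assignment and consider the optimization problem over $\{\tilde\gamma_k\}_{k=1}^K$, $\{\tilde M_{k,s}\}_{k\le K,s\le S}$, $\{T_k^{\rm com,ul}\}$, $\{T_k^{\rm com,dl}\}$: $$\min\ \frac I\eta\sum_{k=1}^K\frac{|\mathcal D_k|}{|\mathcal D|}(1-\tilde\gamma_k)+\frac{V\eta}{\sqrt{|\mathcal D|}}\sqrt{\sum_{k=1}^K\frac1{-\tilde\gamma_k^2+a_k}}$$ subject to, for all $k$ (and all $(k,s)$ where indicated): $T_k^{\rm com,dl}+\frac{C_k|\mathcal D_k|}{f_k}+T_k^{\rm com,ul}\le T_0$; $\sum_{s=1}^S\frac{\tilde M_{k,s}(2^{R^{\rm ul}_{k,s}/B}-1)\sigma^2Q}{|h^{\rm ul}_{k,s}|^2R^{\rm ul}_{k,s}}+C_k|\mathcal D_k|\Omega_kf_k^2+\xi_k\le E_{k,0}$; $\sum_{s=1}^S\tilde M_{k,s}\ge\tilde\gamma_kM$; $0\le\tilde\gamma_k<1$; $T_k^{\rm com,dl}\ge\tilde M_{k,s}Q/R^{\rm dl}_{k,s}$ for all $(k,s)$; $T_k^{\rm com,ul}\ge\tilde M_{k,s}Q/R^{\rm ul}_{k,s}$ for all $(k,s)$. This problem is convex (over the domain where the objective is defined, i.e. $\tilde\gamma_k^2<a_k$ for all $k$).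
   Context: All of the following are fixed positive constants: $I=U'(n_1+n_2)\mathcal H^2\mathcal G^4$, $\eta$, $V=\sqrt{6C/(\delta\lambda)}$, $|\mathcal D_k|$ and $|\mathcal D|=\sum_k|\mathcal D_k|$, $a_k=\frac{2\lambda+\Lambda_{k,\min}}{2\lambda}$ (with $\lambda>0$, $a_k>0$), $C_k$ (processor operations per sample), $f_k$ (processor frequency), $T_0$ (latency budget), $B$ (subcarrier bandwidth), $\sigma^2$ (noise power), $Q$ (bits per parameter), channel gains $h^{\rm ul}_{k,s}$, uplink and downlink rates $R^{\rm ul}_{k,s},R^{\rm dl}_{k,s}$, $\Omega_k$, $\xi_k$, energy budgets $E_{k,0}$, and $M=(n_1+n_2)r$. Here $\tilde\gamma_k=1-\gamma_k$ where $\gamma_k$ is device $k$'s dropout rate, and $\tilde M_{k,s}$ is the number of parameters device $k$ transmits on subcarrier $s$. *)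

(* Defs.v *)
From HB Require Import structures.
From mathcomp Require Import all_boot all_order all_algebra.
From mathcomp Require Import all_classical all_reals all_analysis.
Set Implicit Arguments. Unset Strict Implicit. Unset Printing Implicit Defensive.
Import Order.TTheory GRing.Theory Num.Theory.
Local Open Scope ring_scope.

Record point (R : realType) (K S : nat) := Point {
  gam : 'I_K -> R;
  Mt  : 'I_K -> 'I_S -> R;
  Tul : 'I_K -> R;
  Tdl : 'I_K -> R }.

Definition comb (R : realType) K S (t : R) (x y : point R K S) : point R K S :=
  Point (fun k => t * gam x k + (1 - t) * gam y k)
        (fun k s => t * Mt x k s + (1 - t) * Mt y k s)
        (fun k => t * Tul x k + (1 - t) * Tul y k)
        (fun k => t * Tdl x k + (1 - t) * Tdl y k).

Definition convex_pts (R : realType) K S (A : point R K S -> Prop) : Prop :=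
  forall x y t, A x -> A y -> 0 <= t <= 1 -> A (comb t x y).

Definition convex_fun_on (R : realType) K S (A : point R K S -> Prop)
  (f : point R K S -> R) : Prop :=
  forall x y t, A x -> A y -> 0 <= t <= 1 ->
    f (comb t x y) <= t * f x + (1 - t) * f y.

Definition a_coef (R : realType) K (lam : R) (Lmin : 'I_K -> R) (k : 'I_K) : R :=
  (2 * lam + Lmin k) / (2 * lam).

Definition Dtot (R : realType) K (Dk : 'I_K -> nat) : R := (\sum_(k < K) Dk k)%:R.

Definition dom (R : realType) K S (a : 'I_K -> R) (x : point R K S) : Prop :=
  forall k, gam x k ^+ 2 < a k.

Definition objective (R : realType) K S (I eta V : R) (Dk : 'I_K -> nat)
  (a : 'I_K -> R) (x : point R K S) : R :=
  I / eta * (\sum_(k < K) ((Dk k)%:R / Dtot R Dk) * (1 - gam x k))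
  + V * eta / Num.sqrt (Dtot R Dk)
    * Num.sqrt (\sum_(k < K) 1 / (- gam x k ^+ 2 + a k)).

(* Constraint functions, each constraint being  g x <= 0  (or  g x < 0). *)
Definition g_lat (R : realType) K S (C f : 'I_K -> R) (Dk : 'I_K -> nat) (T0 : R)
  (k : 'I_K) (x : point R K S) : R :=
  Tdl x k + C k * (Dk k)%:R / f k + Tul x k - T0.

Definition ecoef (R : realType) K S (B sigma2 Q : R) (h Rul : 'I_K -> 'I_S -> R)
  (k : 'I_K) (s : 'I_S) : R :=
  ((2 : R) `^ (Rul k s / B) - 1) * sigma2 * Q / (`|h k s| ^+ 2 * Rul k s).

Definition g_en (R : realType) K S (B sigma2 Q : R) (h Rul : 'I_K -> 'I_S -> R)
  (C f Om xi E0 : 'I_K -> R) (Dk : 'I_K -> nat) (k : 'I_K) (x : point R K S) : R :=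
  \sum_(s < S) Mt x k s * ecoef B sigma2 Q h Rul k s
  + C k * (Dk k)%:R * Om k * f k ^+ 2 + xi k - E0 k.

Definition g_cnt (R : realType) K S (M : R) (k : 'I_K) (x : point R K S) : R :=
  gam x k * M - \sum_(s < S) Mt x k s.

Definition g_lo (R : realType) K S (k : 'I_K) (x : point R K S) : R := - gam x k.
Definition g_hi (R : realType) K S (k : 'I_K) (x : point R K S) : R := gam x k - 1.

Definition g_dl (R : realType) K S (Q : R) (Rdl : 'I_K -> 'I_S -> R)
  (k : 'I_K) (s : 'I_S) (x : point R K S) : R := Mt x k s * Q / Rdl k s - Tdl x k.
Definition g_ul (R : realType) K S (Q : R) (Rul : 'I_K -> 'I_S -> R)
  (k : 'I_K) (s : 'I_S) (x : point R K S) : R := Mt x k s * Q / Rul k s - Tul x k.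

Definition feasible (R : realType) K S (a : 'I_K -> R) (C f Om xi E0 : 'I_K -> R)
  (Dk : 'I_K -> nat) (T0 B sigma2 Q M : R) (h Rul Rdl : 'I_K -> 'I_S -> R)
  (x : point R K S) : Prop :=
  dom a x /\
  forall k : 'I_K,
    g_lat C f Dk T0 k x <= 0 /\
    g_en B sigma2 Q h Rul C f Om xi E0 Dk k x <= 0 /\
    g_cnt M k x <= 0 /\
    g_lo k x <= 0 /\
    g_hi k x < 0 /\
    (forall s : 'I_S, g_dl Q Rdl k s x <= 0 /\ g_ul Q Rul k s x <= 0).

(* Main.v *)
Require Import Defs.
From HB Require Import structures.
From mathcomp Require Import all_boot all_order all_algebra.
From mathcomp Require Import all_classical all_reals all_analysis.
From mathcomp Require Import ring lra.
Import Order.TTheory GRing.Theory Num.Theory.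
Local Open Scope ring_scope.

Lemma sq_conv (R : realType) (a x y t : R) : x^+2 < a -> y^+2 < a -> 0 <= t <= 1 ->
  (t*x+(1-t)*y)^+2 < a.
Proof.
move=> hx hy /andP[t0 t1].
set m := t*x+(1-t)*y.
have c1 : m^+2 <= t*x^+2 + (1-t)*y^+2.
  suff : 0 <= t*x^+2 + (1-t)*y^+2 - m^+2 by rewrite subr_ge0.
  have -> : t*x^+2 + (1-t)*y^+2 - m^+2 = t*(1-t)*(x-y)^+2 by rewrite /m; ring.
  by apply: mulr_ge0; [nra| apply: sqr_ge0].
apply: (le_lt_trans c1).
have [->|tn] := eqVneq t 0; first by rewrite mul0r add0r subr0 mul1r.
have tp : 0 < t by rewrite lt_neqAle eq_sym tn t0.
have : 0 < t * (a - x^+2) by apply: mulr_gt0; rewrite // subr_gt0.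
have : 0 <= (1-t) * (a - y^+2) by apply: mulr_ge0; rewrite ?subr_ge0 // ltW.
lra.
Qed.

Lemma sum_comb (R : realType) (n : nat) (F G : 'I_n -> R) (t : R) :
  \sum_(i < n) (t * F i + (1-t) * G i) = t * \sum_(i < n) F i + (1-t) * \sum_(i < n) G i.
Proof. by rewrite big_split /= -!mulr_sumr. Qed.

Lemma psi_conv (R : realType) (a x y t : R) : x^+2 < a -> y^+2 < a -> 0 <= t <= 1 ->
  1 / Num.sqrt (a - (t*x+(1-t)*y)^+2) <=
  t * (1 / Num.sqrt (a - x^+2)) + (1-t) * (1 / Num.sqrt (a - y^+2)).
Proof.
move=> hx hy /andP[t0 t1].
set m := t*x+(1-t)*y.
have hm : m^+2 < a.
  have c1 : m^+2 <= t*x^+2 + (1-t)*y^+2.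
    suff : 0 <= t*x^+2 + (1-t)*y^+2 - m^+2 by rewrite subr_ge0.
    have -> : t*x^+2 + (1-t)*y^+2 - m^+2 = t*(1-t)*(x-y)^+2 by rewrite /m; ring.
    by apply: mulr_ge0; [nra| apply: sqr_ge0].
  apply: (le_lt_trans c1).
  have [->|tn] := eqVneq t 0; first by rewrite mul0r add0r subr0 mul1r.
  have tp : 0 < t by rewrite lt_neqAle eq_sym tn t0.
  have : 0 < t * (a - x^+2) by apply: mulr_gt0; rewrite // subr_gt0.
  have : 0 <= (1-t) * (a - y^+2) by apply: mulr_ge0; rewrite ?subr_ge0 // ltW.
  lra.
set p := Num.sqrt (a - x^+2). set q := Num.sqrt (a - y^+2). set r := Num.sqrt (a - m^+2).
have pp : 0 < p by rewrite sqrtr_gt0 subr_gt0.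
have qp : 0 < q by rewrite sqrtr_gt0 subr_gt0.
have rp : 0 < r by rewrite sqrtr_gt0 subr_gt0.
have p2 : p^+2 = a - x^+2 by rewrite sqr_sqrtr // subr_ge0 ltW.
have q2 : q^+2 = a - y^+2 by rewrite sqr_sqrtr // subr_ge0 ltW.
have r2 : r^+2 = a - m^+2 by rewrite sqr_sqrtr // subr_ge0 ltW.
set s := t* p + (1-t)* q.
have sp : 0 < s by rewrite /s; nra.
have h2 : p* q + x*y <= a.
  have := sqr_ge0 (p - q); have := sqr_ge0 (x - y).
  rewrite !sqrrB p2 q2 => u v; lra.
have h1 : 0 <= t*(1-t) by nra.
have e : r^+2 - s^+2 = 2*(t*(1-t))*(a - x*y - p* q).
  rewrite r2 /s /m; rewrite !sqrrD !exprMn p2 q2; ring.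
have sr : s^+2 <= r^+2.
  rewrite -subr_ge0 e; apply: mulr_ge0; [apply: mulr_ge0 => //|]; lra.
have sr' : s <= r by nra.
have l1 : 1 / r <= 1 / s.
  rewrite !div1r ler_pV2 // inE ?unitfE; apply/andP; split => //; lra.
apply: (le_trans l1).
rewrite !div1r.
have ep : p * p^-1 = 1 by rewrite mulfV // gt_eqF.
have eq : q * q^-1 = 1 by rewrite mulfV // gt_eqF.
have ip : 0 < p^-1 by rewrite invr_gt0.
have iq : 0 < q^-1 by rewrite invr_gt0.
rewrite -[s^-1]mulr1 ler_pdivrMl //.
have hh : 2 <= p* q^-1 + q* p^-1.
  have uv : (p * q^-1) * (q * p^-1) = 1.
    have -> : (p * q^-1) * (q * p^-1) = (p * p^-1) * (q * q^-1) by ring.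
    by rewrite ep eq mulr1.
  have vp : 0 <= q * p^-1 by apply: mulr_ge0; apply: ltW.
  have := mulr_ge0 (sqr_ge0 (p * q^-1 - 1)) vp.
  have -> : (p * q^-1 - 1) ^+ 2 * (q * p^-1) = (p * q^-1) * ((p * q^-1) * (q * p^-1)) - 2 * ((p * q^-1) * (q * p^-1)) + q * p^-1 by ring.
  rewrite uv; lra.
have -> : s * (t * p^-1 + (1 - t) * q^-1) =
   t^+2 * (p* p^-1) + (1-t)^+2 * (q* q^-1) + t*(1-t)*(p* q^-1 + q* p^-1) by rewrite /s; ring.
rewrite ep eq; nra.
Qed.

Lemma mink (R : realType) (n : nat) (u v c : 'I_n -> R) (t : R) :
  (forall k, 0 < u k) -> (forall k, 0 < v k) ->
  (forall k, 0 <= c k <= t * u k + (1-t) * v k) -> 0 <= t <= 1 ->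
  Num.sqrt (\sum_(k < n) c k ^+ 2) <=
  t * Num.sqrt (\sum_(k < n) u k ^+ 2) + (1-t) * Num.sqrt (\sum_(k < n) v k ^+ 2).
Proof.
move=> hu hv hc /andP[t0 t1].
case: n u v c hu hv hc => [|n] u v c hu hv hc.
  rewrite !big_ord0 sqrtr0 mulr0 mulr0 addr0 //.
set A := Num.sqrt (\sum_(k < n.+1) u k ^+ 2).
set B := Num.sqrt (\sum_(k < n.+1) v k ^+ 2).
have Su : 0 < \sum_(k < n.+1) u k ^+ 2.
  rewrite big_ord_recl; have := exprn_gt0 2 (hu ord0).
  have : 0 <= \sum_(i < n) u (lift ord0 i) ^+ 2 by apply: sumr_ge0 => i _; apply: sqr_ge0.
  lra.
have Sv : 0 < \sum_(k < n.+1) v k ^+ 2.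
  rewrite big_ord_recl; have := exprn_gt0 2 (hv ord0).
  have : 0 <= \sum_(i < n) v (lift ord0 i) ^+ 2 by apply: sumr_ge0 => i _; apply: sqr_ge0.
  lra.
have Ap : 0 < A by rewrite sqrtr_gt0.
have Bp : 0 < B by rewrite sqrtr_gt0.
have A2 : A^+2 = \sum_(k < n.+1) u k ^+ 2 by rewrite sqr_sqrtr // ltW.
have B2 : B^+2 = \sum_(k < n.+1) v k ^+ 2 by rewrite sqr_sqrtr // ltW.
have T0 : 0 <= t * A + (1-t) * B by nra.
rewrite -(ger0_norm T0) -sqrtr_sqr ler_sqrt; last by apply: sqr_ge0.
have h1 : 0 <= t*(1-t) by nra.
have step : forall k, c k ^+ 2 <= t^+2 * u k ^+ 2 + (1-t)^+2 * v k ^+ 2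
     + t*(1-t) * (B / A * u k ^+ 2 + A / B * v k ^+ 2).
  move=> k; have /andP[c0 c1] := hc k.
  have w0 : c k ^+ 2 <= (t * u k + (1-t) * v k) ^+ 2.
    rewrite ler_sqr ?nnegrE //; apply: le_trans c1.
    done.
  apply: (le_trans w0).
  have pk : 2 * u k * v k <= B / A * u k ^+ 2 + A / B * v k ^+ 2.
    rewrite -subr_ge0.
    have -> : B / A * u k ^+ 2 + A / B * v k ^+ 2 - 2 * u k * v k
       = A^-1 * B^-1 * (B * u k - A * v k) ^+ 2.
      field; apply/andP; split; apply: lt0r_neq0 => //.
    apply: mulr_ge0; last by apply: sqr_ge0.
    by apply: mulr_ge0; rewrite invr_ge0 ltW.
  have -> : (t * u k + (1-t) * v k) ^+ 2 = t^+2 * u k ^+ 2 + (1-t)^+2 * v k ^+ 2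
     + t*(1-t) * (2 * u k * v k) by ring.
  rewrite lerD2l; exact: ler_wpM2l.
apply: (le_trans (ler_sum _ (fun k _ => step k))).
rewrite !big_split /= -!mulr_sumr.
rewrite big_split /= -!mulr_sumr.
rewrite -A2 -B2.
have -> : (t * A + (1 - t) * B) ^+ 2 = t ^+ 2 * A ^+ 2 + (1 - t) ^+ 2 * B ^+ 2
   + t * (1 - t) * (B / A * A ^+ 2 + A / B * B ^+ 2).
  field; apply/andP; split; apply: lt0r_neq0 => //.
done.
Qed.

Lemma lt_comb (R : realType) (b x y t : R) : x < b -> y < b -> 0 <= t <= 1 ->
  t*x+(1-t)*y < b.
Proof.
move=> hx hy /andP[t0 t1].
have [->|tn] := eqVneq t 0; first by rewrite mul0r add0r subr0 mul1r.
have tp : 0 < t by rewrite lt_neqAle eq_sym tn t0.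
have : 0 < t * (b - x) by apply: mulr_gt0; rewrite // subr_gt0.
have : 0 <= (1-t) * (b - y) by apply: mulr_ge0; rewrite ?subr_ge0 // ltW.
lra.
Qed.

Lemma le_comb (R : realType) (x y t : R) : x <= 0 -> y <= 0 -> 0 <= t <= 1 ->
  t*x+(1-t)*y <= 0.
Proof. move=> hx hy /andP[t0 t1]; nra. Qed.

Lemma inv_sq (R : realType) (a g : R) : g^+2 < a ->
  1 / (- g^+2 + a) = (1 / Num.sqrt (a - g^+2))^+2.
Proof.
move=> h; rewrite expr_div_n expr1n sqr_sqrtr; first by rewrite addrC.
by rewrite subr_ge0 ltW.
Qed.

Lemma eqle (R : realType) (x y : R) : x = y -> x <= y.
Proof. by move=> ->. Qed.

Arguments le_comb {R x y t}.
Arguments lt_comb {R b x y t}.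

Theorem lemma4 (R : realType) (K S : nat)
  (I eta V lam T0 B sigma2 Q M : R)
  (Lmin C f Om xi E0 : 'I_K -> R) (Dk : 'I_K -> nat)
  (h Rul Rdl : 'I_K -> 'I_S -> R)
  (hI : 0 < I) (heta : 0 < eta) (hV : 0 < V) (hlam : 0 < lam)
  (ha : forall k, 0 < a_coef lam Lmin k)
  (hT0 : 0 < T0) (hB : 0 < B) (hsig : 0 < sigma2) (hQ : 0 < Q) (hM : 0 < M)
  (hD : forall k, (0 < Dk k)%N) (hC : forall k, 0 < C k) (hf : forall k, 0 < f k)
  (hOm : forall k, 0 < Om k) (hxi : forall k, 0 < xi k) (hE0 : forall k, 0 < E0 k)
  (hh : forall k s, 0 < h k s) (hRul : forall k s, 0 < Rul k s)
  (hRdl : forall k s, 0 < Rdl k s) :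
  let a := a_coef lam Lmin in
  let D := @dom R K S a in
  convex_pts D /\
      convex_fun_on D (objective I eta V Dk a) /\
      (forall k, convex_fun_on D (g_lat C f Dk T0 k)) /\
      (forall k, convex_fun_on D (g_en B sigma2 Q h Rul C f Om xi E0 Dk k)) /\
      (forall k, convex_fun_on D (g_cnt M k)) /\
      (forall k, convex_fun_on D (g_lo k) /\ convex_fun_on D (g_hi k)) /\
      (forall k s, convex_fun_on D (g_dl Q Rdl k s) /\ convex_fun_on D (g_ul Q Rul k s)) /\
      convex_pts (feasible a C f Om xi E0 Dk T0 B sigma2 Q M h Rul Rdl).
Proof.
move=> a D.
have Dc : convex_pts D.
  by move=> x y t hx hy ht k; rewrite /=; apply: sq_conv.
have Glat : forall k, convex_fun_on D (g_lat C f Dk T0 k).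
  move=> k x y t _ _ _; rewrite /g_lat /=.
  by apply: eqle; ring.
have Gen : forall k, convex_fun_on D (g_en B sigma2 Q h Rul C f Om xi E0 Dk k).
  move=> k x y t _ _ _; rewrite /g_en /=.
  under eq_bigr do rewrite mulrDl -!mulrA.
  by rewrite sum_comb; apply: eqle; ring.
have Gcnt : forall k, convex_fun_on D (g_cnt M k).
  move=> k x y t _ _ _; rewrite /g_cnt /= sum_comb.
  by apply: eqle; ring.
have Glohi : forall k, convex_fun_on D (g_lo k) /\ convex_fun_on D (g_hi k).
  move=> k; split => x y t _ _ _; rewrite /g_lo /g_hi /=; by apply: eqle; ring.
have Gdlul : forall k s, convex_fun_on D (g_dl Q Rdl k s) /\ convex_fun_on D (g_ul Q Rul k s).
  move=> k s; split => x y t _ _ _; rewrite /g_dl /g_ul /=; by apply: eqle; ring.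
have Obj : convex_fun_on D (objective I eta V Dk a).
  move=> x y t hx hy ht; rewrite /objective /=.
  have E1 : \sum_(k < K) (Dk k)%:R / Dtot R Dk * (1 - (t * gam x k + (1 - t) * gam y k))
     = t * \sum_(k < K) (Dk k)%:R / Dtot R Dk * (1 - gam x k)
       + (1-t) * \sum_(k < K) (Dk k)%:R / Dtot R Dk * (1 - gam y k).
    rewrite -sum_comb; apply: eq_bigr => k _; ring.
  have cge : 0 <= V * eta / Num.sqrt (Dtot R Dk).
    by apply: divr_ge0; [apply: mulr_ge0; apply: ltW| apply: sqrtr_ge0].
  have E2 : forall z, D z -> \sum_(k < K) 1 / (- gam z k ^+ 2 + a k)
       = \sum_(k < K) (1 / Num.sqrt (a k - gam z k ^+ 2)) ^+ 2.
    by move=> z hz; apply: eq_bigr => k _; apply: inv_sq.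
  rewrite E1 (E2 _ hx) (E2 _ hy) (E2 (comb t x y)); last exact: Dc.
  have Z := @mink R K (fun k => 1 / Num.sqrt (a k - gam x k ^+ 2))
     (fun k => 1 / Num.sqrt (a k - gam y k ^+ 2))
     (fun k => 1 / Num.sqrt (a k - gam (comb t x y) k ^+ 2)) t.
  have pos : forall z, D z -> forall k, 0 < 1 / Num.sqrt (a k - gam z k ^+ 2).
    by move=> z hz k; rewrite div1r invr_gt0 sqrtr_gt0 subr_gt0; apply: hz.
  have cb : forall k, 0 <= 1 / Num.sqrt (a k - gam (comb t x y) k ^+ 2) <=
     t * (1 / Num.sqrt (a k - gam x k ^+ 2)) + (1-t) * (1 / Num.sqrt (a k - gam y k ^+ 2)).
    move=> k; apply/andP; split; first by apply: ltW; apply: pos; exact: Dc.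
    by rewrite /=; apply: psi_conv; [apply: hx|apply: hy|exact: ht].
  have Z' := ler_wpM2l cge (Z (pos _ hx) (pos _ hy) cb ht).
  move: Z'; rewrite /=.
  set c := V * eta / _.
  set P := Num.sqrt _. set X := Num.sqrt _. set Y := Num.sqrt _.
  set L1 := \sum_(k < K) _. set L2 := \sum_(k < K) _.
  lra.
split; first done. split; first done. split; first done. split; first done.
split; first done. split; first done. split; first done.
move=> x y t [hxD hx] [hyD hy] ht; split; first exact: Dc.
move=> k.
have [l1 [e1 [c1 [lo1 [hi1 s1]]]]] := hx k.
have [l2 [e2 [c2 [lo2 [hi2 s2]]]]] := hy k.
split; first exact: le_trans (Glat k x y t hxD hyD ht) (le_comb l1 l2 ht).
split; first exact: le_trans (Gen k x y t hxD hyD ht) (le_comb e1 e2 ht).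
split; first exact: le_trans (Gcnt k x y t hxD hyD ht) (le_comb c1 c2 ht).
split; first exact: le_trans ((Glohi k).1 x y t hxD hyD ht) (le_comb lo1 lo2 ht).
split; first exact: le_lt_trans ((Glohi k).2 x y t hxD hyD ht) (lt_comb hi1 hi2 ht).
move=> s; have [d1 u1] := s1 s; have [d2 u2] := s2 s.
split; first exact: le_trans ((Gdlul k s).1 x y t hxD hyD ht) (le_comb d1 d2 ht).
exact: le_trans ((Gdlul k s).2 x y t hxD hyD ht) (le_comb u1 u2 ht).
Qed.
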